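(* Let $r\in(0,1)$ and let $k\geq1$ be an integer. Let $W_1,W_2,\dots$ be i.i.d.\ copies of a positive random variable $W$ (an i.i.d.\ multiplicative cascade with scale ratio $r$) such that $\log W$ is infinitely divisible with L\'evy triplet $(a,\sigma^2,\nu)$, i.e.\ with cumulant generating function $$\psi(p)=\log\mathbb{E}[W^p]=ap+\frac{\sigma^2p^2}{2}+\int\bigl(e^{px}-1-px\,\mathbf{1}_{|x|\le1}\bigr)\,\nu(dx),$$ and define the scaling exponents $\zeta_p=\psi(p)/\ln r$ and incremental exponents $\delta_p=\zeta_{p+k}-\zeta_p=(\psi(p+k)-\psi(p))/\ln r$. Say that A1 holds with $\beta\in(0,1)$ if $\delta_\infty=\lim_{p\to\infty}\delta_p$ exists and is finite and $\delta_{p+k}=(1-\beta)\delta_\infty+\beta\delta_p$ for all $p\in k\mathbb{N}_0=\{0,k,2k,\dots\}$. Assume nontrivial intermittency, i.e.\ $C=(\delta_0-\delta_\infty)/(1-\beta)>0$. Then A1 holds with $\beta\in(0,1)$ if and only if $\sigma^2=0$ and $\nu=\lambda\delta_b$ (a point mass at $b$) for some $b<0$ and $\lambda>0$. That is, among cascades with log-infinitely-divisible generator, A1 selects exactly the log-Poisson class ($\log W=a'+bN$, $N\sim\mathrm{Poisson}(\lambda)$); no other log-infinitely-divisible cascade (log-normal, log-stable, or any other) satisfies A1.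
   Context: $\ln$ denotes the natural logarithm. The L\'evy measure $\nu$ has no atom at $0$. *)

(* Defs.v *)
From HB Require Import structures.
From mathcomp Require Import all_boot all_order all_algebra.
From mathcomp Require Import all_classical all_reals all_analysis.
Import Order.TTheory GRing.Theory Num.Theory.
Import numFieldNormedType.Exports.
Set Implicit Arguments. Unset Strict Implicit. Unset Printing Implicit Defensive.
Local Open Scope classical_set_scope.
Local Open Scope ring_scope.

Section LevyCascade.
Context {R : realType}.

Definition levy_integrand (p x : R) : R :=
  expR (p * x) - 1 - (if `|x| <= 1 then p * x else 0).

Definition is_levy_measure (nu : {measure set R -> \bar R}) : Prop :=
  nu [set 0] = 0%E /\ (\int[nu]_x (Num.min 1 (x ^+ 2))%:E < +oo)%E.

(* Cumulant generating function psi(p) = log E[W^p] given by the Levy triplet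
   (a, sigma2, nu) of log W. *)
Definition cgf (a sigma2 : R) (nu : {measure set R -> \bar R}) (p : R) : R :=
  a * p + sigma2 * p ^+ 2 / 2 + Rintegral nu setT (levy_integrand p).

Definition zeta (r a sigma2 : R) nu (p : R) : R := cgf a sigma2 nu p / ln r.

Definition incr_exp (r : R) (k : nat) (a sigma2 : R) nu (p : R) : R :=
  zeta r a sigma2 nu (p + k%:R) - zeta r a sigma2 nu p.

Definition A1 (r : R) (k : nat) (a sigma2 : R) nu (beta dinf : R) : Prop :=
  (incr_exp r k a sigma2 nu p @[p --> +oo] --> dinf) /\
  forall n : nat,
    incr_exp r k a sigma2 nu ((n * k)%N%:R + k%:R)
    = (1 - beta) * dinf + beta * incr_exp r k a sigma2 nu (n * k)%N%:R.

Definition intermittency_C (r : R) (k : nat) (a sigma2 : R) nu (beta dinf : R) : R :=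
  (incr_exp r k a sigma2 nu 0 - dinf) / (1 - beta).

End LevyCascade.

(* Main.v *)
Require Import Defs.
From HB Require Import structures.
From mathcomp Require Import all_boot all_order all_algebra.
From mathcomp Require Import all_classical all_reals all_analysis.
From mathcomp Require Import ring lra measurable_realfun.
Import Order.TTheory GRing.Theory Num.Theory.
Import numFieldNormedType.Exports.
Local Open Scope classical_set_scope.
Local Open Scope ring_scope.

Lemma Rint_dirac (R : realType) (nu : {measure set R -> \bar R}) (lam b : R)
  (f : R -> R) : 0 <= lam ->
  (forall A : set R, measurable A -> nu A = (lam%:E * \d_b A)%E) ->
  measurable_fun setT f -> Rintegral nu setT f = lam * f b.
Proof.
move=> lam0 H mf.
have mF : measurable_fun [set: R] (fun x => (f x)%:E) by exact/measurable_EFinP.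
rewrite /Rintegral.
rewrite (eq_measure_integral (mscale (NngNum lam0) \d_b)); last first.
  by move=> A mA _; rewrite H.
rewrite integralE.
rewrite ge0_integral_mscale //; last by exact: measurable_funepos.
rewrite ge0_integral_mscale //; last by exact: measurable_funeneg.
rewrite integral_dirac //; last exact: measurable_funepos.
rewrite integral_dirac //; last exact: measurable_funeneg.
rewrite diracE in_setT mul1e mul1e /= funeposE funenegE /=.
have [fb0|fb0] := leP 0 (f b).
  rewrite max_l ?lee_fin // max_r ?lee_fin ?oppr_le0 //.
  by rewrite -EFinM -EFinM -EFinB /= mulr0 subr0.
rewrite max_r ?lee_fin ?ltW // max_l ?lee_fin ?oppr_ge0 ?ltW //.
by rewrite -EFinM -EFinM -EFinB /= mulr0 sub0r mulrN opprK.
Qed.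

Lemma levy_meas (R : realType) (nu : {measure set R -> \bar R}) (p : R) :
  nu.-integrable setT (fun x => (levy_integrand p x)%:E) ->
  measurable_fun setT (levy_integrand p).
Proof. by move=> /measurable_int /measurable_EFinP. Qed.

Lemma back_dir (R : realType) (r : R) (k : nat) (a : R)
    (nu : {measure set R -> \bar R}) (b lam : R) :
  0 < r < 1 -> (1 <= k)%N ->
  (forall p : R, 0 <= p ->
     nu.-integrable setT (fun x => (levy_integrand p x)%:E)) ->
  b < 0 -> 0 < lam -> (forall A : set R, measurable A -> nu A = (lam%:E * \d_b A)%E) ->
  (exists beta dinf : R, 0 < beta < 1 /\ A1 r k a 0 nu beta dinf /\
       0 < intermittency_C r k a 0 nu beta dinf).
Proof.
move=> /andP[r0 r1] k1 hint b0 lam0 Hnu.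
set K : R := k%:R.
have K0 : 0 < K by rewrite /K ltr0n.
have lnr0 : ln r < 0 by apply: ln_lt0; rewrite r0 r1.
have lnr0' : ln r != 0 by rewrite lt_eqF.
set be := expR (K * b).
set c1 := if `|b| <= 1 then K * b else 0.
set dinf := (a * K - lam * c1) / ln r.
have key : forall p, 0 <= p ->
   incr_exp r k a 0 nu p = dinf + lam * (be - 1) / ln r * expR (p * b).
  move=> p p0.
  have pK0 : 0 <= p + K by rewrite addr_ge0 // ltW.
  rewrite /incr_exp /zeta /cgf -/K.
  rewrite !(@Rint_dirac R nu lam b _ (ltW lam0) Hnu); try exact: levy_meas (hint _ _).
  rewrite /levy_integrand [(p + K) * b]mulrDl expRD -/be /dinf /c1.
  case: ifP => _; field; exact: lnr0'.
exists be, dinf; split.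
  rewrite expR_gt0 /= expR_lt1 pmulr_rlt0 //.
split; last first.
  rewrite /intermittency_C key // mul0r expR0 mulr1 addrAC subrr add0r.
  have be1 : be < 1 by rewrite expR_lt1 pmulr_rlt0.
  have -> : lam * (be - 1) / ln r / (1 - be) = lam / (- ln r).
    field; apply/andP; split => //; rewrite subr_eq0 eq_sym lt_eqF //.
  by rewrite divr_gt0 // oppr_gt0.
split.
  have L : (fun p => dinf + lam * (be - 1) / ln r * expR (p * b)) @ +oo --> dinf + lam * (be - 1) / ln r * 0.
    apply: cvgD; first exact: cvg_cst.
    apply: cvgMl_tmp.
    have -> : (fun p => expR (p * b)) = (fun x => expR (- x)) \o (fun p => p * - b).
      by apply: funext => p /=; rewrite mulrN opprK.
    apply: cvg_comp; last exact: cvgr_expR.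
    apply/cvgryPge => A.
    apply: filterS (nbhs_pinfty_ge (num_real (A / - b))) => p hp.
    by rewrite -ler_pdivrMr ?oppr_gt0.
  rewrite mulr0 addr0 in L.
  apply: cvg_trans L.
  apply: near_eq_cvg.
  apply: filterS (nbhs_pinfty_ge (num_real 0)) => p hp.
  by rewrite key.
move=> n.
have p0 : (0 : R) <= (n * k)%N%:R by [].
rewrite key ?addr_ge0 // key //.
rewrite mulrDl expRD -/be.
field; exact: lnr0'.
Qed.

Lemma lin2 (R : realType) (nu : {measure set R -> \bar R}) (f g : R -> R) (c : R) :
  nu.-integrable setT (fun x => (f x)%:E) -> nu.-integrable setT (fun x => (g x)%:E) ->
  nu.-integrable setT (fun x => (f x + c * g x)%:E) /\
  Rintegral nu setT (fun x => f x + c * g x) = Rintegral nu setT f + c * Rintegral nu setT g.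
Proof.
move=> hf hg.
have hcg : nu.-integrable setT (fun x => (c * g x)%:E).
  apply: (eq_integrable _ (fun x => c%:E * (g x)%:E)%E) => //; try exact: integrableZl;
  try (by move=> x _; rewrite EFinM).
split.
  apply: (eq_integrable _ ((fun x => (f x)%:E) \+ (fun x => (c * g x)%:E))%E) => //;
  try exact: integrableD; try (by move=> x _; rewrite /= EFinD).
rewrite RintegralD //.
by rewrite RintegralZl.
Qed.

Lemma fwd_dir (R : realType) (r : R) (k : nat) (a sigma2 : R)
    (nu : {measure set R -> \bar R}) :
  0 < r < 1 -> (1 <= k)%N -> 0 <= sigma2 -> is_levy_measure nu ->
  (forall p : R, 0 <= p ->
     nu.-integrable setT (fun x => (levy_integrand p x)%:E)) ->
  (exists beta dinf : R, 0 < beta < 1 /\ A1 r k a sigma2 nu beta dinf /\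
       0 < intermittency_C r k a sigma2 nu beta dinf) ->
   (sigma2 = 0 /\ exists b lam : R, b < 0 /\ 0 < lam /\
       forall A : set R, measurable A -> nu A = (lam%:E * \d_b A)%E).
Proof.
move=> /andP[r0 r1] k1 s0 [nu0 _] hint [be [d [/andP[be0 be1] [[_ HA] HC]]]].
set K : R := k%:R.
have K0 : 0 < K by rewrite /K ltr0n.
have K0' : K != 0 by rewrite gt_eqF.
have lnr0 : ln r < 0 by apply: ln_lt0; rewrite r0 r1.
have lnr0' : ln r != 0 by rewrite lt_eqF.
pose ps := fun j : nat => cgf a sigma2 nu (j * k)%N%:R.
pose I := fun j : nat => @levy_integrand R (j * k)%N%:R.
have hI : forall j, nu.-integrable setT (fun x => (I j x)%:E).
  by move=> j; apply: hint.
pose u := fun n : nat => incr_exp r k a sigma2 nu (n * k)%N%:R.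
have uE : forall n, u n = (ps n.+1 - ps n) / ln r.
  by move=> n; rewrite /u /incr_exp /zeta -natrD -mulSnr mulrBl.
have HA' : forall n, u n.+1 = (1 - be) * d + be * u n.
  by move=> n; rewrite /u mulSnr natrD HA.
have Hsum : ps 4 - (2 + 2 * be) * ps 3 + (1 + 4 * be + be ^+ 2) * ps 2
    - (2 * be + 2 * be ^+ 2) * ps 1 + be ^+ 2 * ps 0 = 0.
  have -> : ps 4 - (2 + 2 * be) * ps 3 + (1 + 4 * be + be ^+ 2) * ps 2
    - (2 * be + 2 * be ^+ 2) * ps 1 + be ^+ 2 * ps 0
    = ln r * (u 3 - (1 + 2 * be) * u 2 + (2 * be + be ^+ 2) * u 1 - be ^+ 2 * u 0).
    rewrite !uE; field; exact: lnr0'.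
  rewrite (HA' 2) (HA' 1) (HA' 0); ring.
pose F := fun x => I 4 x + (- (2 + 2 * be)) * I 3 x + (1 + 4 * be + be ^+ 2) * I 2 x
    + (- (2 * be + 2 * be ^+ 2)) * I 1 x + be ^+ 2 * I 0 x.
have [iF RF] : nu.-integrable setT (fun x => (F x)%:E) /\
   Rintegral nu setT F = Rintegral nu setT (I 4) + (- (2 + 2 * be)) * Rintegral nu setT (I 3)
    + (1 + 4 * be + be ^+ 2) * Rintegral nu setT (I 2)
    + (- (2 * be + 2 * be ^+ 2)) * Rintegral nu setT (I 1) + be ^+ 2 * Rintegral nu setT (I 0).
  have [i1 e1] := lin2 _ _ _ _ (- (2 + 2 * be)) (hI 4) (hI 3).
  have [i2 e2] := lin2 _ _ _ _ (1 + 4 * be + be ^+ 2) i1 (hI 2).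
  have [i3 e3] := lin2 _ _ _ _ (- (2 * be + 2 * be ^+ 2)) i2 (hI 1).
  have [i4 e4] := lin2 _ _ _ _ (be ^+ 2) i3 (hI 0).
  split; first exact: i4.
  by rewrite /F e4 e3 e2 e1.
have FE : forall x, F x = ((expR (K * x) - 1) * (expR (K * x) - be)) ^+ 2.
  move=> x; rewrite /F /I /levy_integrand !natrM -!mulrA !(expRM_natl _ (K * x)).
  move: (expR (K * x)) => E.
  case: ifP => _; rewrite ?expr0 ?expr1 ?mulr0n ?mul0r ?mulr1n ?mul1r; ring.
have Fge0 : forall x, 0 <= F x by move=> x; rewrite FE sqr_ge0.
have RF0 : 0 <= Rintegral nu setT F by apply: Rintegral_ge0 => x _; exact: Fge0.
have main : sigma2 * K ^+ 2 * (1 - be) ^+ 2 + Rintegral nu setT F = 0.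
  rewrite -Hsum RF.
  pose RI := fun j => Rintegral nu setT (I j).
  have psE : forall j, ps j = a * (j%:R * K) + sigma2 * (j%:R * K) ^+ 2 / 2 + RI j.
    by move=> j; rewrite /ps /cgf -natrM.
  rewrite !psE.
  rewrite -/(RI 4) -/(RI 3) -/(RI 2) -/(RI 1) -/(RI 0).
  move: (RI 4) (RI 3) (RI 2) (RI 1) (RI 0) => r4 r3 r2 r1' r0'.
  by rewrite ?mulr0n ?mulr1n ?mul0r ?mul1r; field.
have X0 : 0 <= sigma2 * K ^+ 2 * (1 - be) ^+ 2.
  apply: mulr_ge0; first (apply: mulr_ge0 =>//; exact: sqr_ge0). exact: sqr_ge0.
have s2 : sigma2 = 0.
  have : sigma2 * K ^+ 2 * (1 - be) ^+ 2 = 0.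
    by move: (main) (X0) (RF0); move: (sigma2 * K ^+ 2 * (1 - be) ^+ 2) (Rintegral nu setT F) => X Y; lra.
  have pos : 0 < K ^+ 2 * (1 - be) ^+ 2.
    by apply: mulr_gt0; apply: exprn_gt0 => //; rewrite subr_gt0.
  by move/eqP; rewrite -mulrA mulf_eq0 (gt_eqF pos) orbF => /eqP.
have RF00 : Rintegral nu setT F = 0.
  by move: (main) (X0) (RF0); move: (sigma2 * K ^+ 2 * (1 - be) ^+ 2) (Rintegral nu setT F) => X Y; lra.
have IF0 : (\int[nu]_x `|(F x)%:E|)%E = 0%E.
  rewrite (eq_integral (fun x => (F x)%:E)); last first.
    by move=> x _; rewrite gee0_abs // lee_fin.
  have fin := integrable_fin_num measurableT iF.
  by rewrite -(fineK fin) -/(Rintegral nu setT F) RF00.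
have mF : measurable_fun setT (fun x => (F x)%:E) by exact: measurable_int iF.
have := (ae_eq_integral_abs nu measurableT mF).1 IF0.
case=> N [mN N0 subN].
set bb := ln be / K.
have Kbb : K * bb = ln be by rewrite /bb mulrC divfK.
have ebb : expR (K * bb) = be by rewrite Kbb lnK // posrE.
have bb0 : bb < 0 by rewrite /bb pmulr_llt0 ?invr_gt0 // ln_lt0 // be0 be1.
have inN : forall x, x != bb -> x != 0 -> N x.
  move=> x xb x0; apply: subN => /= H.
  have := H Logic.I; move/eqP; rewrite eqe FE sqrf_eq0 mulf_eq0 !subr_eq0.
  case/orP => /eqP.
    rewrite -expR0 => /expR_inj /eqP; rewrite mulf_eq0 (negbTE K0') /=.
    by apply/negP.
  rewrite -ebb => /expR_inj /mulfI => /(_ K0') /eqP.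
  by apply/negP.
have vnz : levy_integrand K bb != 0.
  rewrite /levy_integrand ebb; case: ifP => _.
    have Kbb0 : K * bb != 0 by rewrite mulf_neq0 // lt_eqF.
    have := expR_gt1Dx Kbb0.
    rewrite ebb => h; rewrite gt_eqF //; move: h; move: (K * bb) => y h; lra.
  by rewrite subr0 lt_eqF // subr_lt0.
set v := levy_integrand K bb.
have hg := hint K (ltW K0).
have mg : measurable_fun setT (fun x => (levy_integrand K x)%:E) by exact: measurable_int hg.
have vpos : 0 < `|v| by rewrite normr_gt0.
have Hle := le_integral_abse nu measurableT mg vpos.
have ms : measurable (setT `&` [set x | (`|v|%:E <= `|(levy_integrand K x)%:E|)%E]).
  by apply: emeasurable_fun_c_infty => //; exact: measurableT_comp.
have sub1 : (nu [set bb] <= nu (setT `&` [set x | (`|v|%:E <= `|(levy_integrand K x)%:E|)%E]))%E.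
  apply: le_measure; rewrite ?inE //.
  by move=> x /= ->; split.
have fin : nu [set bb] \is a fin_num.
  rewrite ge0_fin_numE ?measure_ge0 //.
  have ilt : (\int[nu]_x `|(levy_integrand K x)%:E| < +oo)%E by case/integrableP: hg.
  rewrite ltNge; apply/negP => hoo.
  have : (+oo <= \int[nu]_x `|(levy_integrand K x)%:E|)%E.
    apply: le_trans Hle.
    rewrite leye_eq in hoo; move/eqP: hoo => hoo.
    have : (+oo <= nu (setT `&` [set x | (`|v|%:E <= `|(levy_integrand K x)%:E|)%E]))%E.
      by rewrite -hoo.
    rewrite leye_eq => /eqP ->.
    by rewrite gt0_muley ?lte_fin.
  by rewrite leye_eq => /eqP h; rewrite h in ilt.
set lam := fine (nu [set bb]).
have lamE : nu [set bb] = lam%:E by rewrite fineK.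
have lam0 : 0 <= lam by rewrite fine_ge0 // measure_ge0.
have Hnu : forall A : set R, measurable A -> nu A = (lam%:E * \d_bb A)%E.
  move=> A mA.
  rewrite (measureDI nu mA (measurable_set1 bb)).
  rewrite [X in (X + _)%E](_ : _ = 0%E); last first.
    apply/eqP; rewrite eq_le measure_ge0 andbT.
    apply: (@le_trans _ _ (nu (N `|` [set 0]))).
      apply: le_measure; rewrite ?inE //; first exact: measurableD.
        exact: measurableU.
      move=> x [Ax /= xb].
      have [->|x0] := eqVneq x 0; first by right.
      by left; apply: inN => //; apply/eqP.
    apply: (le_trans (measureU2 nu mN (measurable_set1 0))).
    have e : (nu N + nu [set (0%R : R)] <= 0)%E by rewrite N0 nu0 adde0.
    exact: e.
  rewrite add0e diracE.
  have [h|h] := boolP (bb \in A).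
    rewrite setIidr; first by rewrite mule1 -lamE.
    by move=> x /= ->; rewrite -inE.
  have -> : A `&` [set bb] = set0.
    by apply/seteqP; split => // x [Ax /= xb]; move/negP: h; apply; rewrite -xb; exact: mem_set.
  by rewrite measure0 mule0.
split => //.
exists bb, lam; split => //; split => //.
rewrite lt_neqAle lam0 andbT; apply/negP => /eqP lam00.
have psE : forall j, ps j = a * (j * k)%N%:R.
  move=> j; rewrite /ps /cgf s2 (@Rint_dirac R nu lam bb _ lam0 Hnu).
    by rewrite -lam00 !mul0r !addr0.
  exact: levy_meas (hint _ (ler0n _ _)).
have u10 : u 1 = u 0.
  by rewrite !uE !psE !natrM ?mulr0n ?mulr1n ?mul0r ?mul1r ?mulr0; field.
move: (HA' 0); rewrite u10 => h.
have ud : u 0 = d.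
  have : (1 - be) * (u 0 - d) = 0 by rewrite mulrBr mulrBl; lra.
  by move/eqP; rewrite mulf_eq0 subr_eq0 eq_sym (lt_eqF be1) /= subr_eq0 => /eqP.
move: HC; rewrite /intermittency_C.
have -> : incr_exp r k a sigma2 nu 0 = u 0 by rewrite /u mul0n.
by rewrite ud subrr mul0r ltxx.
Qed.

Theorem mainTheorem2 (R : realType) (r : R) (k : nat) (a sigma2 : R)
    (nu : {measure set R -> \bar R}) :
  0 < r < 1 -> (1 <= k)%N -> 0 <= sigma2 -> is_levy_measure nu ->
  (forall p : R, 0 <= p ->
     nu.-integrable setT (fun x => (levy_integrand p x)%:E)) ->
  ((exists beta dinf : R, 0 < beta < 1 /\ A1 r k a sigma2 nu beta dinf /\
       0 < intermittency_C r k a sigma2 nu beta dinf)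
   <->
   (sigma2 = 0 /\ exists b lam : R, b < 0 /\ 0 < lam /\
       forall A : set R, measurable A -> nu A = (lam%:E * \d_b A)%E)).
Proof.
move=> hr hk hs hL hint; split; first exact: fwd_dir.
case=> -> [b [lam [b0 [lam0 Hnu]]]].
exact: (@back_dir R r k a nu b lam hr hk hint b0 lam0 Hnu).
Qed.
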